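(* Let $r\in\mathbb N_{>0}$, let $\lambda\in\pi\mathbb N_{>0}$ or $\lambda\in\lambda_0+2\pi\mathbb Z$ with $\lambda_0\in\{\pi/3,\pi/2,2\pi/3\}$, and choose $\mu,\nu\in\mathbb R$ and $\xi_0=x_0+iy_0$ such that: (i) if $\lambda\in\pi\mathbb N_{>0}$: $\nu>0$ and $x_0,y_0\in\frac1r\mathbb Z$; (ii) if $\lambda\in\pi/2+2\pi\mathbb Z$: $\mu+i\nu=i$ and $x_0,y_0\in\frac1r\mathbb Z$; (iii) if $\lambda\in\pi/3+2\pi\mathbb Z$: $\mu+i\nu=e^{i\pi/3}$, $x_0\in\frac12+\frac1r\mathbb Z$, $y_0\in\frac1r\mathbb Z$; (iv) if $\lambda\in 2\pi/3+2\pi\mathbb Z$: $\mu+i\nu=e^{i\pi/3}$, $x_0\in\frac1r\mathbb Z$, $y_0\in\frac12+\frac1r\mathbb Z$. Then for every $z\in\mathbb R$ the elements $l_1=(\tfrac1{\sqrt\nu},0,0)$, $l_2=(-\tfrac{\mu}{\sqrt\nu}+i\sqrt\nu,0,0)$, $l_3=(0,\tfrac1r,0)$, $l_4=(\tfrac{x_0}{\sqrt\nu}-\tfrac{\mu y_0}{\sqrt\nu}+i\sqrt\nu y_0,\,z,\,\lambda)$ generate a lattice in $\mathrm{Osc}_1$.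
   Context: $\mathrm{Osc}_1$ is the set $\mathbb C\times\mathbb R\times\mathbb R$ with multiplication $(\xi_1,z_1,t_1)(\xi_2,z_2,t_2)=(\xi_1+e^{it_1}\xi_2,\ z_1+z_2+\tfrac12\operatorname{Im}(\overline{\xi_1}e^{it_1}\xi_2),\ t_1+t_2)$. A lattice is a discrete subgroup with finite-volume (equivalently, since the group is solvable, compact) quotient. *)

(* Defs.v *)
From Stdlib Require Import Reals Lra ZArith.
Open Scope R_scope.

(* An element (xi, z, t) of Osc_1 = C x R x R, with xi = xr + i xi_im,
   is represented as the 4-tuple (xr, xi_im, z, t). *)
Record Osc := mkOsc { o_re : R; o_im : R; o_z : R; o_t : R }.

(* e^{it} * (a + i b) *)
Definition rot_re (t a b : R) : R := cos t * a - sin t * b.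
Definition rot_im (t a b : R) : R := sin t * a + cos t * b.

(* (xi1,z1,t1)(xi2,z2,t2) =
   (xi1 + e^{it1} xi2, z1 + z2 + 1/2 Im(conj(xi1) e^{it1} xi2), t1 + t2).
   With w = e^{it1} xi2 = wr + i wi and xi1 = a1 + i b1,
   Im(conj(xi1) w) = a1 * wi - b1 * wr. *)
Definition osc_mul (g h : Osc) : Osc :=
  let wr := rot_re (o_t g) (o_re h) (o_im h) in
  let wi := rot_im (o_t g) (o_re h) (o_im h) in
  mkOsc (o_re g + wr) (o_im g + wi)
        (o_z g + o_z h + / 2 * (o_re g * wi - o_im g * wr))
        (o_t g + o_t h).

Definition osc_one : Osc := mkOsc 0 0 0 0.

Definition osc_inv (g : Osc) : Osc :=
  mkOsc (- rot_re (- o_t g) (o_re g) (o_im g))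
        (- rot_im (- o_t g) (o_re g) (o_im g))
        (- o_z g) (- o_t g).

Definition osc_dist (g h : Osc) : R :=
  sqrt ((o_re g - o_re h)^2 + (o_im g - o_im h)^2
        + (o_z g - o_z h)^2 + (o_t g - o_t h)^2).

Inductive gen_by (S : list Osc) : Osc -> Prop :=
  | gen_base : forall g, List.In g S -> gen_by S g
  | gen_one : gen_by S osc_one
  | gen_mul : forall g h, gen_by S g -> gen_by S h -> gen_by S (osc_mul g h)
  | gen_inv : forall g, gen_by S g -> gen_by S (osc_inv g).

Definition discrete (Gamma : Osc -> Prop) : Prop :=
  forall g, Gamma g -> exists eps, eps > 0 /\
    forall h, Gamma h -> osc_dist h g < eps -> h = g.

(* G / Gamma compact: there is a compact (closed ball) K with G = K Gamma *)
Definition cocompact (Gamma : Osc -> Prop) : Prop :=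
  exists M, forall g, exists k gam,
    osc_dist k osc_one <= M /\ Gamma gam /\ g = osc_mul k gam.

Definition is_lattice (Gamma : Osc -> Prop) : Prop :=
  discrete Gamma /\ cocompact Gamma.

Definition in_frac_Z (r : nat) (q : R) : Prop :=
  exists a : Z, q = IZR a / INR r.

(* Main.v *)
Require Import Defs.
From Stdlib Require Import Reals ZArith Lra Lia Nsatz Psatz.
Open Scope R_scope.

Lemma osc_eq a b c d a' b' c' d' :
  a = a' -> b = b' -> c = c' -> d = d' -> mkOsc a b c d = mkOsc a' b' c' d'.
Proof. intros; subst; reflexivity. Qed.

Lemma mul_assoc g h k : osc_mul (osc_mul g h) k = osc_mul g (osc_mul h k).
Proof.
  destruct g as [a1 b1 z1 t1], h as [a2 b2 z2 t2], k as [a3 b3 z3 t3].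
  unfold osc_mul, rot_re, rot_im; simpl. apply osc_eq; rewrite ?cos_plus, ?sin_plus; try ring.
  pose proof (sin2_cos2 t1) as H. unfold Rsqr in H. nsatz.
Qed.

Lemma mul_inv_r g : osc_mul g (osc_inv g) = osc_one.
Proof.
  destruct g as [a b z t]. unfold osc_mul, osc_inv, osc_one, rot_re, rot_im; simpl.
  rewrite cos_neg, sin_neg.
  pose proof (sin2_cos2 t) as H. unfold Rsqr in H.
  apply osc_eq; try ring; nsatz.
Qed.

Lemma mul_one_r g : osc_mul g osc_one = g.
Proof.
  destruct g as [a b z t]. unfold osc_mul, osc_one, rot_re, rot_im; simpl.
  apply osc_eq; ring.
Qed.

Lemma cancel_r a b : osc_mul (osc_mul a b) (osc_inv b) = a.
Proof. rewrite mul_assoc, mul_inv_r, mul_one_r. reflexivity. Qed.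

Definition latp (D mu s : R) (A B : Z) (x y : R) : Prop :=
  x = (IZR A / D - mu * IZR B / D) / s /\ y = IZR B / D * s.

Definition RotOK (D mu s t : R) : Prop :=
  forall A B x y, latp D mu s A B x y ->
    exists A' B', latp D mu s A' B' (rot_re t x y) (rot_im t x y).

Lemma RotOK_0 D mu s : RotOK D mu s 0.
Proof.
  intros A B x y [Hx Hy]. exists A, B. unfold rot_re, rot_im. rewrite cos_0, sin_0.
  subst x y. split; ring.
Qed.

Lemma RotOK_plus D mu s t1 t2 :
  RotOK D mu s t1 -> RotOK D mu s t2 -> RotOK D mu s (t1 + t2).
Proof.
  intros H1 H2 A B x y H.
  destruct (H2 A B x y H) as [A1 [B1 HA1]].
  destruct (H1 A1 B1 _ _ HA1) as [A2 [B2 HA2]].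
  exists A2, B2.
  replace (rot_re (t1+t2) x y) with (rot_re t1 (rot_re t2 x y) (rot_im t2 x y)).
  replace (rot_im (t1+t2) x y) with (rot_im t1 (rot_re t2 x y) (rot_im t2 x y)).
  exact HA2.
  all: unfold rot_re, rot_im; rewrite cos_plus, sin_plus; ring.
Qed.

Lemma RotOK_Z D mu s lam : RotOK D mu s lam -> RotOK D mu s (- lam) ->
  forall m : Z, RotOK D mu s (IZR m * lam).
Proof.
  intros Hp Hm m. induction m using Z.peano_ind.
  - rewrite Rmult_0_l. apply RotOK_0.
  - rewrite succ_IZR. replace ((IZR m + 1) * lam) with (lam + IZR m * lam) by ring.
    apply RotOK_plus; auto.
  - rewrite <- Z.sub_1_r, minus_IZR. replace ((IZR m - 1) * lam) with (- lam + IZR m * lam) by ring.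
    apply RotOK_plus; auto.
Qed.

Definition Inv (D mu s lam z : R) (g : Osc) : Prop :=
  exists m A B C : Z, o_t g = IZR m * lam /\ latp D mu s A B (o_re g) (o_im g) /\
     o_z g = IZR m * z + IZR C / (2 * D * D).

Lemma Inv_mul D mu s lam z g h : D <> 0 -> s <> 0 ->
  (forall m, RotOK D mu s (IZR m * lam)) ->
  Inv D mu s lam z g -> Inv D mu s lam z h -> Inv D mu s lam z (osc_mul g h).
Proof.
  intros HD Hs HR [m1 [A1 [B1 [C1 [Ht1 [HL1 Hz1]]]]]] [m2 [A2 [B2 [C2 [Ht2 [HL2 Hz2]]]]]].
  destruct (HR m1 A2 B2 _ _ HL2) as [A' [B' [Hw1 Hw2]]].
  rewrite <- Ht1 in Hw1, Hw2.
  destruct HL1 as [Hx1 Hy1].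
  exists (m1 + m2)%Z, (A1 + A')%Z, (B1 + B')%Z, (C1 + C2 + A1 * B' - B1 * A')%Z.
  unfold osc_mul; cbn [o_t o_re o_im o_z].
  rewrite Hw1, Hw2, Ht1, Ht2, Hz1, Hz2, Hx1, Hy1.
  unfold latp. repeat rewrite ?plus_IZR, ?minus_IZR, ?mult_IZR.
  split; [ring|]. split; [split; field; auto|]. field; auto.
Qed.

Lemma Inv_inv D mu s lam z g : D <> 0 -> s <> 0 ->
  (forall m, RotOK D mu s (IZR m * lam)) ->
  Inv D mu s lam z g -> Inv D mu s lam z (osc_inv g).
Proof.
  intros HD Hs HR [m [A [B [C [Ht [HL Hz]]]]]].
  destruct (HR (-m)%Z A B _ _ HL) as [A' [B' [Hw1 Hw2]]].
  rewrite opp_IZR in Hw1, Hw2.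
  replace (- IZR m * lam) with (- o_t g) in Hw1 by (rewrite Ht; ring).
  replace (- IZR m * lam) with (- o_t g) in Hw2 by (rewrite Ht; ring).
  exists (-m)%Z, (-A')%Z, (-B')%Z, (-C)%Z.
  unfold osc_inv; cbn [o_t o_re o_im o_z].
  rewrite Hw1, Hw2, Ht, Hz. unfold latp. rewrite !opp_IZR.
  split; [ring|]. split; [split; field; auto|]. field; auto.
Qed.

Lemma Z_abs_lt1 (k : Z) : Rabs (IZR k) < 1 -> k = 0%Z.
Proof.
  intro H. apply Rabs_def2 in H. destruct H as [H1 H2].
  assert (a : (k < 1)%Z) by (apply lt_IZR; exact H1).
  assert (b : (-1 < k)%Z) by (apply lt_IZR; exact H2).
  lia.
Qed.

Lemma kz_gap (k : Z) c : 0 < c -> Rabs (IZR k * c) < c -> k = 0%Z.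
Proof.
  intros Hc H. apply Z_abs_lt1. rewrite Rabs_mult, (Rabs_pos_eq c) in H by lra.
  nra.
Qed.

Lemma abs_le_sqrt x S : x^2 <= S -> Rabs x <= sqrt S.
Proof. intro H. rewrite <- sqrt_Rsqr_abs. apply sqrt_le_1_alt. unfold Rsqr. nra. Qed.

Lemma dist_comps g h :
  Rabs (o_re h - o_re g) <= osc_dist h g /\ Rabs (o_im h - o_im g) <= osc_dist h g /\
  Rabs (o_z h - o_z g) <= osc_dist h g /\ Rabs (o_t h - o_t g) <= osc_dist h g.
Proof.
  unfold osc_dist. refine (conj _ (conj _ (conj _ _))); apply abs_le_sqrt; pose proof (pow2_ge_0 (o_re h - o_re g)); pose proof (pow2_ge_0 (o_im h - o_im g)); pose proof (pow2_ge_0 (o_z h - o_z g)); pose proof (pow2_ge_0 (o_t h - o_t g)); lra.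
Qed.

Lemma discrete_of_Inv (P : Osc -> Prop) D mu s lam z : 0 < D -> 0 < s -> lam <> 0 ->
  (forall g, P g -> Inv D mu s lam z g) -> discrete P.
Proof.
  intros HD Hs Hl HP g Pg.
  assert (Hal : 0 < Rabs lam) by (apply Rabs_pos_lt; auto).
  exists (Rmin (Rmin (Rabs lam) (s / D)) (Rmin (/ (D * s)) (/ (2 * D * D)))).
  split.
  { apply Rmin_pos; apply Rmin_pos; try apply Rinv_0_lt_compat; try apply Rdiv_lt_0_compat; nra. }
  intros h Ph Hd.
  destruct (dist_comps g h) as [Hre [Him [Hz Ht]]].
  destruct (HP g Pg) as [m [A [B [C [Htg [[Hxg Hyg] Hzg]]]]]].
  destruct (HP h Ph) as [m' [A' [B' [C' [Hth [[Hxh Hyh] Hzh]]]]]].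
  assert (E1 : (m' - m)%Z = 0%Z).
  { apply (kz_gap _ (Rabs lam)); auto.
    rewrite Rabs_mult, Rabs_Rabsolu, <- Rabs_mult, minus_IZR. replace ((IZR m' - IZR m) * lam) with (o_t h - o_t g) by (rewrite Hth, Htg; ring).
    pose proof (Rmin_l (Rmin (Rabs lam) (s / D)) (Rmin (/ (D * s)) (/ (2 * D * D)))).
    pose proof (Rmin_l (Rabs lam) (s / D)). lra. }
  assert (E2 : (B' - B)%Z = 0%Z).
  { apply (kz_gap _ (s / D)); [apply Rdiv_lt_0_compat; lra|].
    rewrite minus_IZR. replace ((IZR B' - IZR B) * (s / D)) with (o_im h - o_im g) by (rewrite Hyh, Hyg; field; lra).
    pose proof (Rmin_l (Rmin (Rabs lam) (s / D)) (Rmin (/ (D * s)) (/ (2 * D * D)))).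
    pose proof (Rmin_r (Rabs lam) (s / D)). lra. }
  assert (EB : B' = B) by lia. subst B'.
  assert (E3 : (A' - A)%Z = 0%Z).
  { apply (kz_gap _ (/ (D * s))); [apply Rinv_0_lt_compat; nra|].
    rewrite minus_IZR. replace ((IZR A' - IZR A) * / (D * s)) with (o_re h - o_re g) by (rewrite Hxh, Hxg; field; lra).
    pose proof (Rmin_r (Rmin (Rabs lam) (s / D)) (Rmin (/ (D * s)) (/ (2 * D * D)))).
    pose proof (Rmin_l (/ (D * s)) (/ (2 * D * D))). lra. }
  assert (EA : A' = A) by lia. subst A'.
  assert (Em : m' = m) by lia. subst m'.
  assert (E4 : (C' - C)%Z = 0%Z).
  { apply (kz_gap _ (/ (2 * D * D))); [apply Rinv_0_lt_compat; nra|].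
    rewrite minus_IZR. replace ((IZR C' - IZR C) * / (2 * D * D)) with (o_z h - o_z g) by (rewrite Hzh, Hzg; field; lra).
    pose proof (Rmin_r (Rmin (Rabs lam) (s / D)) (Rmin (/ (D * s)) (/ (2 * D * D)))).
    pose proof (Rmin_r (/ (D * s)) (/ (2 * D * D))). lra. }
  assert (EC : C' = C) by lia. subst C'.
  destruct g as [a b c d], h as [a' b' c' d']; simpl in *. subst. reflexivity.
Qed.

Lemma zpow S g0 (P : Z -> Osc -> Prop) : List.In g0 S -> P 0%Z osc_one ->
  (forall k g, P k g -> P (Z.succ k) (osc_mul g g0)) ->
  (forall k g, P k g -> P (Z.pred k) (osc_mul g (osc_inv g0))) ->
  forall k, exists g, gen_by S g /\ P k g.
Proof.
  intros Hin H0 Hs Hp k. induction k using Z.peano_ind.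
  - exists osc_one. split; [apply gen_one|auto].
  - destruct IHk as [g [G Pg]]. exists (osc_mul g g0). split; [apply gen_mul; [auto|apply gen_base; auto]|auto].
  - destruct IHk as [g [G Pg]]. exists (osc_mul g (osc_inv g0)).
    split; [apply gen_mul; [auto|apply gen_inv, gen_base; auto]|auto].
Qed.

Lemma sqrt_bound4 a b c d N : Rabs a <= N -> Rabs b <= N -> Rabs c <= N -> Rabs d <= N ->
  sqrt (a^2 + b^2 + c^2 + d^2) <= 2 * N.
Proof.
  intros Ha Hb Hc Hd.
  assert (0 <= N) by (pose proof (Rabs_pos a); lra).
  rewrite <- (sqrt_pow2 (2 * N)) by lra. apply sqrt_le_1_alt.
  rewrite <- (pow2_abs a), <- (pow2_abs b), <- (pow2_abs c), <- (pow2_abs d).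
  pose proof (Rabs_pos a); pose proof (Rabs_pos b); pose proof (Rabs_pos c); pose proof (Rabs_pos d).
  nra.
Qed.

Lemma cocompact_gen (S : list Osc) (r : nat) (lam mu s z0 re4 im4 : R) :
  (0 < r)%nat -> lam <> 0 -> 0 < s ->
  List.In (mkOsc (/ s) 0 0 0) S -> List.In (mkOsc (- mu / s) s 0 0) S ->
  List.In (mkOsc 0 0 (/ INR r) 0) S -> List.In (mkOsc re4 im4 z0 lam) S ->
  cocompact (gen_by S).
Proof.
  intros Hr Hl Hs I1 I2 I3 I4.
  assert (HrR : 0 < INR r) by (apply lt_0_INR; auto).
  assert (P4 : forall k : Z, exists g, gen_by S g /\ o_t g = IZR k * lam).
  { apply (zpow S _ (fun k g => o_t g = IZR k * lam) I4); simpl.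
    - ring.
    - intros k g H. rewrite H, succ_IZR. ring.
    - intros k g H. rewrite H, <- Z.sub_1_r, minus_IZR. ring. }
  assert (P1 : forall k : Z, exists g, gen_by S g /\
     (o_t g = 0 /\ o_re g = IZR k / s /\ o_im g = 0)).
  { apply (zpow S _ (fun k g => o_t g = 0 /\ o_re g = IZR k / s /\ o_im g = 0) I1); simpl.
    - repeat split; try field; lra.
    - intros k g [H1 [H2 H3]]. unfold rot_re, rot_im. rewrite H1, H2, H3, succ_IZR, cos_0, sin_0.
      repeat split; try field; lra.
    - intros k g [H1 [H2 H3]]. unfold rot_re, rot_im. rewrite H1, H2, H3, <- Z.sub_1_r, minus_IZR, Ropp_0, cos_0, sin_0.
      repeat split; try field; lra. }
  assert (P2 : forall k : Z, exists g, gen_by S g /\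
     (o_t g = 0 /\ o_re g = - mu * IZR k / s /\ o_im g = IZR k * s)).
  { apply (zpow S _ (fun k g => o_t g = 0 /\ o_re g = - mu * IZR k / s /\ o_im g = IZR k * s) I2); simpl.
    - repeat split; try field; lra.
    - intros k g [H1 [H2 H3]]. unfold rot_re, rot_im. rewrite H1, H2, H3, succ_IZR, cos_0, sin_0.
      repeat split; try field; lra.
    - intros k g [H1 [H2 H3]]. unfold rot_re, rot_im. rewrite H1, H2, H3, <- Z.sub_1_r, minus_IZR, Ropp_0, cos_0, sin_0.
      repeat split; try field; lra. }
  assert (P3 : forall k : Z, exists g, gen_by S g /\
     (o_t g = 0 /\ o_re g = 0 /\ o_im g = 0 /\ o_z g = IZR k / INR r)).
  { apply (zpow S _ (fun k g => o_t g = 0 /\ o_re g = 0 /\ o_im g = 0 /\ o_z g = IZR k / INR r) I3); simpl.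
    - repeat split; try field; lra.
    - intros k g [H1 [H2 [H3 H4]]]. unfold rot_re, rot_im. rewrite H1, H2, H3, H4, succ_IZR, cos_0, sin_0.
      repeat split; try field; lra.
    - intros k g [H1 [H2 [H3 H4]]]. unfold rot_re, rot_im. rewrite H1, H2, H3, H4, <- Z.sub_1_r, minus_IZR, Ropp_0, cos_0, sin_0.
      repeat split; try field; lra. }
  assert (PT : forall A B : Z, exists g, gen_by S g /\
     (o_t g = 0 /\ o_re g = (IZR A - mu * IZR B) / s /\ o_im g = IZR B * s)).
  { intros A B. destruct (P1 A) as [g1 [G1 [H1 [H2 H3]]]]. destruct (P2 B) as [g2 [G2 [K1 [K2 K3]]]].
    exists (osc_mul g1 g2). split; [apply gen_mul; auto|].
    unfold osc_mul, rot_re, rot_im; simpl. rewrite H1, H2, H3, K1, K2, K3, cos_0, sin_0.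
    repeat split; try field; lra. }
  exists (2 * (Rabs lam + (/ s + s) + / INR r)).
  intro g.
  destruct (P4 (- up (o_t g / lam))%Z) as [g1 [G1 Ht1]].
  set (h1 := osc_mul g g1).
  set (t1 := o_t h1).
  assert (Ht1b : Rabs t1 <= Rabs lam).
  { unfold t1, h1, osc_mul; simpl. rewrite Ht1, opp_IZR.
    destruct (archimed (o_t g / lam)) as [a1 a2].
    replace (o_t g + - IZR (up (o_t g / lam)) * lam) with (- (lam * (IZR (up (o_t g / lam)) - o_t g / lam))) by (field; auto).
    rewrite Rabs_Ropp, Rabs_mult, (Rabs_pos_eq (_ - _)) by lra.
    pose proof (Rabs_pos lam). nra. }
  set (c := cos t1). set (sn := sin t1).
  set (wre := - (c * o_re h1 + sn * o_im h1)).
  set (wim := sn * o_re h1 - c * o_im h1).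
  set (B := up (wim / s)). set (A := up (mu * IZR B + s * wre)).
  destruct (PT A B) as [g2 [G2 [Ht2 [Hre2 Him2]]]].
  set (h2 := osc_mul h1 g2).
  set (J := (- up (o_z h2 * INR r))%Z).
  destruct (P3 J) as [g3 [G3 [Ht3 [Hre3 [Him3 Hz3]]]]].
  set (h3 := osc_mul h2 g3).
  exists h3, (osc_mul (osc_inv g3) (osc_mul (osc_inv g2) (osc_inv g1))).
  split; [|split].
  - assert (Hcs : c * c + sn * sn = 1) by (pose proof (sin2_cos2 t1) as HH; unfold Rsqr in HH; unfold c, sn; lra).
    assert (Hc : Rabs c <= 1) by (apply Rabs_le; apply COS_bound).
    assert (Hsn : Rabs sn <= 1) by (apply Rabs_le; apply SIN_bound).
    set (dre := o_re g2 - wre).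
    set (dim := o_im g2 - wim).
    assert (Hdre : Rabs dre <= / s).
    { destruct (archimed (mu * IZR B + s * wre)) as [a1 a2]. fold A in a1, a2.
      replace dre with ((IZR A - (mu * IZR B + s * wre)) * / s) by (unfold dre; rewrite Hre2; field; lra).
      rewrite Rabs_mult, (Rabs_pos_eq (/ s)) by (left; apply Rinv_0_lt_compat; lra).
      rewrite Rabs_pos_eq by lra. pose proof (Rinv_0_lt_compat s Hs). nra. }
    assert (Hdim : Rabs dim <= s).
    { destruct (archimed (wim / s)) as [a1 a2]. fold B in a1, a2.
      replace dim with ((IZR B - wim / s) * s) by (unfold dim; rewrite Him2; field; lra).
      rewrite Rabs_mult, (Rabs_pos_eq s) by lra.
      rewrite Rabs_pos_eq by lra. nra. }
    assert (E2re : o_re h2 = c * dre - sn * dim).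
    { change (o_re h2) with (o_re h1 + (c * o_re g2 - sn * o_im g2)).
      unfold dre, dim, wre, wim.
      replace (o_re h1) with (o_re h1 * (c*c+sn*sn)) at 1 by (rewrite Hcs; ring). ring. }
    assert (E2im : o_im h2 = sn * dre + c * dim).
    { change (o_im h2) with (o_im h1 + (sn * o_re g2 + c * o_im g2)).
      unfold dre, dim, wre, wim.
      replace (o_im h1) with (o_im h1 * (c*c+sn*sn)) at 1 by (rewrite Hcs; ring). ring. }
    assert (Ebd : forall u v, Rabs u <= 1 -> Rabs v <= 1 -> Rabs (u * dre + v * dim) <= / s + s).
    { intros u v Hu Hv. eapply Rle_trans; [apply Rabs_triang|]. rewrite !Rabs_mult.
      pose proof (Rabs_pos dre); pose proof (Rabs_pos dim); pose proof (Rabs_pos u); pose proof (Rabs_pos v). nra. }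
    assert (E3 : o_re h3 = o_re h2 /\ o_im h3 = o_im h2 /\ o_t h3 = t1 /\
                 o_z h3 = o_z h2 + IZR J / INR r).
    { change (o_re h3) with (o_re h2 + (cos (o_t h2) * o_re g3 - sin (o_t h2) * o_im g3)).
      change (o_im h3) with (o_im h2 + (sin (o_t h2) * o_re g3 + cos (o_t h2) * o_im g3)).
      change (o_t h3) with ((t1 + o_t g2) + o_t g3).
      change (o_z h3) with (o_z h2 + o_z g3 + / 2 * (o_re h2 * (sin (o_t h2) * o_re g3 + cos (o_t h2) * o_im g3)
         - o_im h2 * (cos (o_t h2) * o_re g3 - sin (o_t h2) * o_im g3))).
      rewrite Hre3, Him3, Ht3, Hz3, Ht2. repeat split; ring. }
    destruct E3 as [E3a [E3b [E3c E3d]]].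
    change (osc_dist h3 osc_one) with (sqrt ((o_re h3 - 0)^2 + (o_im h3 - 0)^2 + (o_z h3 - 0)^2 + (o_t h3 - 0)^2)).
    assert (0 < / s) by (apply Rinv_0_lt_compat; lra).
    assert (0 < / INR r) by (apply Rinv_0_lt_compat; lra).
    pose proof (Rabs_pos lam).
    apply sqrt_bound4.
    + rewrite Rminus_0_r, E3a, E2re. replace (c * dre - sn * dim) with (c * dre + (- sn) * dim) by ring.
      pose proof (Ebd c (- sn) Hc ltac:(rewrite Rabs_Ropp; auto)). lra.
    + rewrite Rminus_0_r, E3b, E2im. pose proof (Ebd sn c Hsn Hc). lra.
    + rewrite Rminus_0_r, E3d. unfold J. rewrite opp_IZR.
      destruct (archimed (o_z h2 * INR r)) as [a1 a2].
      replace (o_z h2 + - IZR (up (o_z h2 * INR r)) / INR r) with (- ((IZR (up (o_z h2 * INR r)) - o_z h2 * INR r) * / INR r)) by (field; lra).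
      rewrite Rabs_Ropp, Rabs_mult, (Rabs_pos_eq (/ INR r)) by lra. rewrite Rabs_pos_eq by lra. nra.
    + rewrite Rminus_0_r, E3c. lra.
  - apply gen_mul; [apply gen_inv; auto|]. apply gen_mul; apply gen_inv; auto.
  - rewrite <- (mul_assoc h3). unfold h3. rewrite cancel_r.
    rewrite <- (mul_assoc h2). unfold h2. rewrite cancel_r. unfold h1. rewrite cancel_r. reflexivity.
Qed.

Lemma rot_gen D mu s t (c sn : R) (f : Z -> Z -> Z * Z) :
  cos t = c -> sin t = sn ->
  (forall A B, let '(A', B') := f A B in
     c * ((IZR A / D - mu * IZR B / D) / s) - sn * (IZR B / D * s) = (IZR A' / D - mu * IZR B' / D) / s /\
     sn * ((IZR A / D - mu * IZR B / D) / s) + c * (IZR B / D * s) = IZR B' / D * s) ->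
  RotOK D mu s t.
Proof.
  intros Hc Hs Hf A B x y [Hx Hy]. specialize (Hf A B). destruct (f A B) as [A' B'].
  exists A', B'. unfold rot_re, rot_im, latp. rewrite Hc, Hs. subst x y. exact Hf.
Qed.

Lemma hex1 D s nu t : D <> 0 -> 0 < s -> s * s = nu -> nu * nu = 3/4 ->
  cos t = 1/2 -> sin t = nu -> RotOK D (1/2) s t.
Proof.
  intros HD Hs Hsn Hnn Hc Hsi.
  apply (rot_gen D (1/2) s t (1/2) nu (fun A B => ((A - B)%Z, A))); auto.
  intros A B. rewrite minus_IZR. subst nu. split; field_simplify; try lra;
  try (replace (s ^ 4) with (3/4) by (rewrite <- Hnn; ring)); field; repeat split; auto; lra.
Qed.

Ltac hexsolve Hnn s := split; field_simplify; try lra;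
  try (replace (s ^ 4) with (3/4) by (rewrite <- Hnn; ring)); field; repeat split; auto; lra.

Lemma hex2 D s nu t : D <> 0 -> 0 < s -> s * s = nu -> nu * nu = 3/4 ->
  cos t = 1/2 -> sin t = - nu -> RotOK D (1/2) s t.
Proof.
  intros HD Hs Hsn Hnn Hc Hsi.
  apply (rot_gen D (1/2) s t (1/2) (- nu) (fun A B => (B, (B - A)%Z))); auto.
  intros A B. rewrite minus_IZR. subst nu. hexsolve Hnn s.
Qed.

Lemma hex3 D s nu t : D <> 0 -> 0 < s -> s * s = nu -> nu * nu = 3/4 ->
  cos t = - (1/2) -> sin t = nu -> RotOK D (1/2) s t.
Proof.
  intros HD Hs Hsn Hnn Hc Hsi.
  apply (rot_gen D (1/2) s t (- (1/2)) nu (fun A B => ((- B)%Z, (A - B)%Z))); auto.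
  intros A B. rewrite minus_IZR, opp_IZR. subst nu. hexsolve Hnn s.
Qed.

Lemma hex4 D s nu t : D <> 0 -> 0 < s -> s * s = nu -> nu * nu = 3/4 ->
  cos t = - (1/2) -> sin t = - nu -> RotOK D (1/2) s t.
Proof.
  intros HD Hs Hsn Hnn Hc Hsi.
  apply (rot_gen D (1/2) s t (- (1/2)) (- nu) (fun A B => ((B - A)%Z, (- A)%Z))); auto.
  intros A B. rewrite minus_IZR, opp_IZR. subst nu. hexsolve Hnn s.
Qed.

Lemma sq1 D t : D <> 0 -> cos t = 0 -> sin t = 1 -> RotOK D 0 1 t.
Proof.
  intros HD Hc Hs.
  apply (rot_gen D 0 1 t 0 1 (fun A B => ((- B)%Z, A))); auto.
  intros A B. rewrite opp_IZR. split; field; auto.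
Qed.

Lemma sq2 D t : D <> 0 -> cos t = 0 -> sin t = -1 -> RotOK D 0 1 t.
Proof.
  intros HD Hc Hs.
  apply (rot_gen D 0 1 t 0 (-1) (fun A B => (B, (- A)%Z))); auto.
  intros A B. rewrite opp_IZR. split; field; auto.
Qed.

Lemma pm1 D mu s t : D <> 0 -> s <> 0 -> cos t = 1 -> sin t = 0 -> RotOK D mu s t.
Proof.
  intros HD Hs Hc Hsi.
  apply (rot_gen D mu s t 1 0 (fun A B => (A, B))); auto.
  intros A B. split; field; auto.
Qed.

Lemma pm2 D mu s t : D <> 0 -> s <> 0 -> cos t = -1 -> sin t = 0 -> RotOK D mu s t.
Proof.
  intros HD Hs Hc Hsi.
  apply (rot_gen D mu s t (-1) 0 (fun A B => ((- A)%Z, (- B)%Z))); auto.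
  intros A B. rewrite !opp_IZR. split; field; auto.
Qed.

Lemma trig_npi (n : nat) : sin (PI * INR n) = 0 /\ (cos (PI * INR n) = 1 \/ cos (PI * INR n) = -1).
Proof.
  induction n as [|n IH].
  - simpl. rewrite Rmult_0_r, sin_0, cos_0. auto.
  - rewrite S_INR. replace (PI * (INR n + 1)) with (PI * INR n + PI) by ring.
    rewrite (sin_plus (PI * INR n)), (cos_plus (PI * INR n)), sin_PI, cos_PI. destruct IH as [H1 [H2|H2]]; rewrite H1, H2;
    split; try ring; [right|left]; ring.
Qed.

Lemma per2 x (k : Z) : cos (x + 2 * PI * IZR k) = cos x /\ sin (x + 2 * PI * IZR k) = sin x.
Proof.
  induction k using Z.peano_ind.
  - rewrite Rmult_0_r, Rplus_0_r. auto.
  - rewrite succ_IZR. replace (x + 2 * PI * (IZR k + 1)) with ((x + 2 * PI * IZR k) + 2 * PI) by ring.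
    rewrite (cos_plus (x + 2 * PI * IZR k)), (sin_plus (x + 2 * PI * IZR k)), cos_2PI, sin_2PI. destruct IHk as [H1 H2]. rewrite H1, H2. split; ring.
  - rewrite <- Z.sub_1_r, minus_IZR. replace (x + 2 * PI * (IZR k - 1)) with ((x + 2 * PI * IZR k) - 2 * PI) by ring.
    rewrite (cos_minus (x + 2 * PI * IZR k)), (sin_minus (x + 2 * PI * IZR k)), cos_2PI, sin_2PI. destruct IHk as [H1 H2]. rewrite H1, H2. split; ring.
Qed.

Lemma assemble (r : nat) (lam mu nu x0 y0 z : R) (Ax By : Z) :
  (0 < r)%nat -> lam <> 0 -> 0 < nu ->
  RotOK (2 * INR r) mu (sqrt nu) lam -> RotOK (2 * INR r) mu (sqrt nu) (- lam) ->
  x0 = IZR Ax / (2 * INR r) -> y0 = IZR By / (2 * INR r) ->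
  is_lattice (gen_by (mkOsc (/ sqrt nu) 0 0 0 :: mkOsc (- mu / sqrt nu) (sqrt nu) 0 0 ::
       mkOsc 0 0 (/ INR r) 0 ::
       mkOsc (x0 / sqrt nu - mu * y0 / sqrt nu) (sqrt nu * y0) z lam :: nil)).
Proof.
  intros Hr Hl Hnu R1 R2 Hx Hy.
  assert (HrR : 0 < INR r) by (apply lt_0_INR; auto).
  assert (Hs : 0 < sqrt nu) by (apply sqrt_lt_R0; auto).
  assert (HD : 0 < 2 * INR r) by lra.
  assert (HDz : IZR (2 * Z.of_nat r) = 2 * INR r) by (rewrite mult_IZR, <- INR_IZR_INZ; reflexivity).
  assert (HR := RotOK_Z _ _ _ _ R1 R2).
  split.
  - apply (discrete_of_Inv _ (2 * INR r) mu (sqrt nu) lam z); auto.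
    intros g Hg. induction Hg as [g Hin| |g h _ IH1 _ IH2|g _ IH].
    + simpl in Hin. destruct Hin as [<-|[<-|[<-|[<-|[]]]]].
      * exists 0%Z, (2 * Z.of_nat r)%Z, 0%Z, 0%Z. unfold latp; cbn [o_re o_im o_z o_t]. rewrite HDz. repeat split; field; lra.
      * exists 0%Z, 0%Z, (2 * Z.of_nat r)%Z, 0%Z. unfold latp; cbn [o_re o_im o_z o_t]. rewrite HDz. repeat split; field; lra.
      * exists 0%Z, 0%Z, 0%Z, (8 * Z.of_nat r)%Z. unfold latp; cbn [o_re o_im o_z o_t]. rewrite mult_IZR, <- INR_IZR_INZ. repeat split; field; lra.
      * exists 1%Z, Ax, By, 0%Z. unfold latp; cbn [o_re o_im o_z o_t]. rewrite Hx, Hy. repeat split; field; lra.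
    + exists 0%Z, 0%Z, 0%Z, 0%Z. unfold latp, osc_one; cbn [o_re o_im o_z o_t]. repeat split; field; lra.
    + apply Inv_mul; auto; lra.
    + apply Inv_inv; auto; lra.
  - apply (cocompact_gen _ r lam mu (sqrt nu) z (x0 / sqrt nu - mu * y0 / sqrt nu) (sqrt nu * y0)); auto; simpl; tauto.
Qed.

Lemma frac_to_D (r : nat) (q : R) : (0 < r)%nat -> in_frac_Z r q ->
  exists A : Z, q = IZR A / (2 * INR r).
Proof.
  intros Hr [a Ha]. assert (0 < INR r) by (apply lt_0_INR; auto).
  exists (2 * a)%Z. rewrite Ha, mult_IZR. field. lra.
Qed.

Lemma frac_half_to_D (r : nat) (q : R) : (0 < r)%nat -> in_frac_Z r (q - / 2) ->
  exists A : Z, q = IZR A / (2 * INR r).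
Proof.
  intros Hr [a Ha]. assert (0 < INR r) by (apply lt_0_INR; auto).
  exists (2 * a + Z.of_nat r)%Z. rewrite plus_IZR, mult_IZR, <- INR_IZR_INZ.
  replace q with (q - / 2 + / 2) by ring. rewrite Ha. field. lra.
Qed.

Theorem lemma4p13 (r : nat) (lam mu nu x0 y0 : R) :
  (0 < r)%nat ->
  ( (exists n : nat, (0 < n)%nat /\ lam = PI * INR n /\
        nu > 0 /\ in_frac_Z r x0 /\ in_frac_Z r y0)
  \/ (exists k : Z, lam = PI / 2 + 2 * PI * IZR k /\
        mu = 0 /\ nu = 1 /\ in_frac_Z r x0 /\ in_frac_Z r y0)
  \/ (exists k : Z, lam = PI / 3 + 2 * PI * IZR k /\
        mu = cos (PI / 3) /\ nu = sin (PI / 3) /\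
        in_frac_Z r (x0 - / 2) /\ in_frac_Z r y0)
  \/ (exists k : Z, lam = 2 * PI / 3 + 2 * PI * IZR k /\
        mu = cos (PI / 3) /\ nu = sin (PI / 3) /\
        in_frac_Z r x0 /\ in_frac_Z r (y0 - / 2)) ) ->
  forall z : R,
    is_lattice (gen_by
      (mkOsc (/ sqrt nu) 0 0 0 ::
       mkOsc (- mu / sqrt nu) (sqrt nu) 0 0 ::
       mkOsc 0 0 (/ INR r) 0 ::
       mkOsc (x0 / sqrt nu - mu * y0 / sqrt nu) (sqrt nu * y0) z lam :: nil)).
Proof.
  intros Hr Hc z.
  assert (HrR : 0 < INR r) by (apply lt_0_INR; auto).
  assert (HD : 2 * INR r <> 0) by lra.
  pose proof PI_RGT_0 as HPI.
  assert (H3 : sqrt 3 * sqrt 3 = 3) by (apply sqrt_sqrt; lra).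
  assert (Hs3 : 0 < sqrt 3) by (apply sqrt_lt_R0; lra).
  destruct Hc as [[n [Hn [Hl [Hnu [Hx Hy]]]]] | [[k [Hl [Hmu [Hnu [Hx Hy]]]]] |
     [[k [Hl [Hmu [Hnu [Hx Hy]]]]] | [k [Hl [Hmu [Hnu [Hx Hy]]]]]]]].
  - destruct (frac_to_D r x0 Hr Hx) as [Ax HAx]. destruct (frac_to_D r y0 Hr Hy) as [By HBy].
    assert (Hs : sqrt nu <> 0) by (apply Rgt_not_eq, sqrt_lt_R0; lra).
    assert (Hn' : 0 < INR n) by (apply lt_0_INR; auto).
    assert (Hl0 : lam <> 0) by (rewrite Hl; nra).
    destruct (trig_npi n) as [Hsin Hcos]. rewrite <- Hl in Hsin, Hcos.
    apply (assemble r lam mu nu x0 y0 z Ax By); auto; try lra.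
    + destruct Hcos as [Hcos|Hcos]; [apply pm1|apply pm2]; auto.
    + destruct Hcos as [Hcos|Hcos]; [apply pm1|apply pm2]; auto;
      rewrite ?cos_neg, ?sin_neg, ?Hcos, ?Hsin; auto; lra.
  - destruct (frac_to_D r x0 Hr Hx) as [Ax HAx]. destruct (frac_to_D r y0 Hr Hy) as [By HBy].
    subst mu nu.
    assert (Hl0 : lam <> 0).
    { rewrite Hl. intro H0. assert (E : PI * IZR (1 + 4 * k) = 0) by (rewrite plus_IZR, mult_IZR; nra).
      apply Rmult_integral in E. destruct E as [E|E]; [lra|]. apply eq_IZR in E. lia. }
    destruct (per2 (PI / 2) k) as [Hc Hsn]. rewrite <- Hl, cos_PI2 in Hc. rewrite <- Hl, sin_PI2 in Hsn.
    apply (assemble r lam 0 1 x0 y0 z Ax By); auto; try lra; rewrite sqrt_1.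
    + apply sq1; auto.
    + apply sq2; auto; rewrite ?cos_neg, ?sin_neg, ?Hc, ?Hsn; auto.
  - destruct (frac_half_to_D r x0 Hr Hx) as [Ax HAx]. destruct (frac_to_D r y0 Hr Hy) as [By HBy].
    rewrite cos_PI3 in Hmu. subst mu.
    assert (Hnu0 : 0 < nu) by (rewrite Hnu, sin_PI3; lra).
    assert (Hss : sqrt nu * sqrt nu = nu) by (apply sqrt_sqrt; lra).
    assert (Hnn : nu * nu = 3 / 4) by (rewrite Hnu, sin_PI3; nra).
    assert (Hs : 0 < sqrt nu) by (apply sqrt_lt_R0; lra).
    assert (Hl0 : lam <> 0).
    { rewrite Hl. intro H0. assert (E : PI * IZR (1 + 6 * k) = 0) by (rewrite plus_IZR, mult_IZR; nra).
      apply Rmult_integral in E. destruct E as [E|E]; [lra|]. apply eq_IZR in E. lia. }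
    destruct (per2 (PI / 3) k) as [Hc Hsn]. rewrite <- Hl, cos_PI3 in Hc. rewrite <- Hl, <- Hnu in Hsn.
    apply (assemble r lam (1/2) nu x0 y0 z Ax By); auto; try lra.
    + apply (hex1 _ _ nu); auto.
    + apply (hex2 _ _ nu); auto; rewrite ?cos_neg, ?sin_neg, ?Hc, ?Hsn; auto.
  - destruct (frac_to_D r x0 Hr Hx) as [Ax HAx]. destruct (frac_half_to_D r y0 Hr Hy) as [By HBy].
    rewrite cos_PI3 in Hmu. subst mu.
    assert (Hnu0 : 0 < nu) by (rewrite Hnu, sin_PI3; lra).
    assert (Hss : sqrt nu * sqrt nu = nu) by (apply sqrt_sqrt; lra).
    assert (Hnn : nu * nu = 3 / 4) by (rewrite Hnu, sin_PI3; nra).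
    assert (Hs : 0 < sqrt nu) by (apply sqrt_lt_R0; lra).
    assert (Hl0 : lam <> 0).
    { rewrite Hl. intro H0. assert (E : PI * IZR (1 + 3 * k) = 0) by (rewrite plus_IZR, mult_IZR; nra).
      apply Rmult_integral in E. destruct E as [E|E]; [lra|]. apply eq_IZR in E. lia. }
    destruct (per2 (2 * PI / 3) k) as [Hc Hsn]. rewrite <- Hl in Hc, Hsn.
    replace (2 * PI / 3) with (2 * (PI / 3)) in Hc, Hsn by field.
    rewrite cos_2PI3 in Hc. rewrite sin_2a, cos_PI3, <- Hnu in Hsn.
    apply (assemble r lam (1/2) nu x0 y0 z Ax By); auto; try lra.
    + apply (hex3 _ _ nu); auto; lra.
    + apply (hex4 _ _ nu); auto; rewrite ?cos_neg, ?sin_neg, ?Hc, ?Hsn; auto; lra.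
Qed.
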